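(* Let $n$ be even, and for $m\ge1$ let $\mathcal{C}_m=\mathbb{C}\{e_1,\dots,e_m\}$ denote the complex Clifford algebra with generators satisfying $e_j^2=-1$, $e_je_k=-e_ke_j$ ($j\ne k$), of dimension $2^m$, with $\mathcal{C}_n\subset\mathcal{C}_{n+1}$ naturally. Suppose there is an invertible $2^{n/2}\times2^{n/2}$ matrix $P_n$ over $\mathcal{C}_n$, not depending on $a$, such that for every $a\in\mathcal{C}_n$ the matrix $\phi_n(a):=P_n(aI_{2^{n/2}})P_n^{-1}$ has all entries in $\mathbb{C}$. Let $e_{[n+1]}=e_1e_2\cdots e_{n+1}$ and $r=(-1)^{\frac12(n+1)(n+2)}$, so that $e_{[n+1]}^2=r$, and fix a square root $\sqrt r\in\mathbb{C}$. Then every $a\in\mathcal{C}_{n+1}$ can be written as $a=a_0+a_1e_{[n+1]}=a_0+e_{[n+1]}a_1$ with $a_0,a_1\in\mathcal{C}_n$. Define $\overline{a}=a_0-a_1e_{[n+1]}$ and $D_a=\mathrm{diag}(aI_{2^{n/2}},\overline{a}I_{2^{n/2}})$. Let $$P_{n+1}=\frac12\begin{pmatrix}(1+\frac{1}{\sqrt r}e_{[n+1]})P_n & -(\sqrt r-e_{[n+1]})P_n\\ \frac1r(\sqrt r-e_{[n+1]})P_n & (1+\frac{1}{\sqrt r}e_{[n+1]})P_n\end{pmatrix},$$ $$P_{n+1}'=\frac12\begin{pmatrix}P_n^{-1}(1+\frac{1}{\sqrt r}e_{[n+1]}) & P_n^{-1}(\sqrt r-e_{[n+1]})\\ -P_n^{-1}\frac1r(\sqrt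 r-e_{[n+1]}) & P_n^{-1}(1+\frac1{\sqrt r}e_{[n+1]})\end{pmatrix}.$$ Then $P_{n+1}$ is invertible with $P_{n+1}^{-1}=P_{n+1}'$, and $$P_{n+1}D_aP_{n+1}^{-1}=\begin{pmatrix}\phi_n(a_0)+\sqrt r\,\phi_n(a_1) & 0\\ 0 & \phi_n(a_0)-\sqrt r\,\phi_n(a_1)\end{pmatrix},$$ a block diagonal matrix with two $2^{n/2}\times2^{n/2}$ complex blocks.
   Context: For an element $c$ and a matrix $M$, $cM$ (resp. $Mc$) denotes the matrix with entries $cM_{jk}$ (resp. $M_{jk}c$). Complex scalars commute with all Clifford elements. *)

(* Defs.v *)
From HB Require Import structures.
From mathcomp Require Import all_boot all_order all_algebra.
From mathcomp Require Export complex.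
From mathcomp Require Export reals.
Set Implicit Arguments. Unset Strict Implicit. Unset Printing Implicit Defensive.
Import Order.TTheory GRing.Theory Num.Theory.
Local Open Scope ring_scope.

(* The Clifford algebra K{e_1,...,e_m} with e_j^2 = -1, e_j e_k = -e_k e_j,
   realised concretely as K-valued functions on subsets of {1..m}
   (index j-1 : 'I_m stands for the generator e_j).  The element
   [clif_blade S] is the basis monomial e_{s_1} e_{s_2} ... e_{s_k}
   with s_1 < ... < s_k the elements of S; dimension 2^m.            *)
Notation clif K m := ({ffun {set 'I_m} -> K}) (only parsing).

Section Clifford.
Variable K : comNzRingType.
Variable m : nat.
Local Notation clif := (clif K m).

Definition clif_blade (S : {set 'I_m}) : clif := [ffun T => (T == S)%:R].

(* sign of e_A e_B = clif_blade_sign A B * e_{A symdiff B}: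
   one transposition for each pair (a in A, b in B, b < a),
   and a factor e_j^2 = -1 for each common index. *)
Definition clif_blade_sign (A B : {set 'I_m}) : K :=
  (-1) ^+ (#|[set p : 'I_m * 'I_m | [&& p.1 \in A, p.2 \in B & (p.2 < p.1)%N]]|
           + #|A :&: B|).

Definition clif_symdiff (A B : {set 'I_m}) : {set 'I_m} := (A :\: B) :|: (B :\: A).

Definition cmul (x y : clif) : clif :=
  [ffun S => \sum_(A : {set 'I_m}) \sum_(B : {set 'I_m} | clif_symdiff A B == S)
                clif_blade_sign A B * x A * y B].

Definition cone : clif := clif_blade set0.

Definition cscal (c : K) : clif := [ffun T => if T == set0 then c else 0].

Definition cgen (i : 'I_m) : clif := clif_blade [set i].

Definition is_scalar (x : clif) : Prop := exists c : K, x = cscal c.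

Definition cmxmul p q r (A : 'M[clif]_(p, q)) (B : 'M[clif]_(q, r)) : 'M[clif]_(p, r) :=
  \matrix_(i, j) \sum_(k < q) cmul (A i k) (B k j).

Definition cmxscalar p (a : clif) : 'M[clif]_p :=
  \matrix_(i, j) if i == j then a else 0.

Definition cmxlmul p q (c : clif) (M : 'M[clif]_(p, q)) : 'M[clif]_(p, q) :=
  \matrix_(i, j) cmul c (M i j).
Definition cmxrmul p q (M : 'M[clif]_(p, q)) (c : clif) : 'M[clif]_(p, q) :=
  \matrix_(i, j) cmul (M i j) c.

End Clifford.

(* C_n inside C_{n+1}: elements with no component on monomials involving
   e_{n+1} (index ord_max). *)
Definition in_clif_sub (K : comNzRingType) (n : nat) (x : clif K n.+1) : Prop :=
  forall S : {set 'I_n.+1}, ord_max \in S -> x S = 0.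

Definition clif_top (K : comNzRingType) (m : nat) : clif K m :=
  \big[@cmul K m/cone K m]_(i < m) cgen K i.

(* Main.v *)
Require Import Defs.
From HB Require Import structures.
From mathcomp Require Import all_boot all_order all_algebra.
From mathcomp Require Import complex reals.
From mathcomp Require Import ring zify.
Import Order.TTheory GRing.Theory Num.Theory.
Local Open Scope ring_scope.

Module Helpers.
Set Implicit Arguments. Unset Strict Implicit. Unset Printing Implicit Defensive.


Section Cl.
Variable K : comNzRingType.
Variable m : nat.
Local Notation clf := {ffun {set 'I_m} -> K}.
Implicit Types (x y z : clf) (A B C S : {set 'I_m}).

Local Notation sd := (@clif_symdiff m).

Lemma in_sd A B i : (i \in sd A B) = (i \in A) (+) (i \in B).
Proof. by rewrite /clif_symdiff !inE; case: (i \in A); case: (i \in B). Qed.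

Lemma sdA A B C : sd (sd A B) C = sd A (sd B C).
Proof. by apply/setP => i; rewrite !in_sd addbA. Qed.
Lemma sdC A B : sd A B = sd B A.
Proof. by apply/setP => i; rewrite !in_sd addbC. Qed.
Lemma sd0 A : sd A set0 = A.
Proof. by apply/setP => i; rewrite !in_sd inE addbF. Qed.
Lemma sd0l A : sd set0 A = A.
Proof. by rewrite sdC sd0. Qed.
Lemma sdK A B : sd (sd A B) B = A.
Proof. by apply/setP => i; rewrite !in_sd -addbA addbb addbF. Qed.
Lemma sdvv A : sd A A = set0.
Proof. by apply/setP => i; rewrite !in_sd addbb inE. Qed.
Lemma sd_eq A B S : (sd A B == S) = (A == sd S B).
Proof. apply/eqP/eqP => [<-|->]; by rewrite sdK. Qed.

Definition sgb (b : bool) : K := if b then -1 else 1.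
Definition sg2 A B : K :=
  \prod_(p : 'I_m * 'I_m) sgb [&& p.1 \in A, p.2 \in B & (p.2 <= p.1)%N].

Lemma sgbX (b c : bool) : sgb (b (+) c) = sgb b * sgb c.
Proof. by case: b; case: c; rewrite /= ?mulr1 ?mul1r ?mulrNN ?mulr1. Qed.

Lemma sg2Dl A B C : sg2 (sd A B) C = sg2 A C * sg2 B C.
Proof.
rewrite /sg2 -big_split; apply: eq_bigr => p _; rewrite in_sd.
by move: (p.1 \in A) (p.1 \in B) (p.2 \in C) (p.2 <= p.1)%N => [] [] [] [];
  rewrite /sgb /= ?mulr1 ?mul1r ?mulrNN ?mulr1.
Qed.
Lemma sg2Dr A B C : sg2 A (sd B C) = sg2 A B * sg2 A C.
Proof.
rewrite /sg2 -big_split; apply: eq_bigr => p _; rewrite in_sd.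
by move: (p.1 \in A) (p.2 \in B) (p.2 \in C) (p.2 <= p.1)%N => [] [] [] [];
  rewrite /sgb /= ?mulr1 ?mul1r ?mulrNN ?mulr1.
Qed.
Lemma sg2_sq A B : sg2 A B * sg2 A B = 1.
Proof.
rewrite /sg2 -big_split big1 // => p _; rewrite /sgb.
by case: (_ && _) => /=; rewrite ?mulrNN ?mulr1.
Qed.
Lemma sg2_cocycle A B C : sg2 A B * sg2 (sd A B) C = sg2 A (sd B C) * sg2 B C.
Proof. rewrite sg2Dl sg2Dr; ring. Qed.
Lemma sg20l A : sg2 set0 A = 1.
Proof. by rewrite /sg2 big1 // => p _; rewrite inE. Qed.
Lemma sg20r A : sg2 A set0 = 1.
Proof. by rewrite /sg2 big1 // => p _; rewrite inE andbF. Qed.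

Lemma prod_sgb (I : finType) (P : pred I) :
  \prod_(i : I) sgb (P i) = (-1) ^+ #|P|.
Proof.
rewrite -[RHS]prodr_const [RHS]big_mkcond /=.
by apply: eq_bigr => i _; rewrite /sgb unfold_in; case: (P i).
Qed.

Lemma sign_sg2 A B : clif_blade_sign K A B = sg2 A B.
Proof.
rewrite /clif_blade_sign exprD.
have -> : sg2 A B = \prod_(p : 'I_m * 'I_m) sgb [&& p.1 \in A, p.2 \in B & (p.2 < p.1)%N]
   * \prod_(p : 'I_m * 'I_m) sgb [&& p.1 \in A, p.2 \in B & (p.2 == p.1 :> nat)].
  rewrite /sg2 -big_split; apply: eq_bigr => p _.
  rewrite leq_eqVlt; case: (p.1 \in A); case: (p.2 \in B) => //=;
   rewrite /sgb ?mulr1 //.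
  by case: (ltngtP p.2 p.1); rewrite /= ?mulr1 ?mul1r.
congr (_ * _).
  rewrite prod_sgb; congr (_ ^+ _); apply: eq_card => p; by rewrite inE.
rewrite (eq_bigr (fun p => sgb [&& p.1 \in A, p.2 \in B & p.2 == p.1])); last first.
  by move=> p _; rewrite val_eqE.
rewrite -(pair_big xpredT xpredT (fun i j => sgb [&& i \in A, j \in B & j == i])) /=.
rewrite -prod_sgb; apply: eq_bigr => i _.
rewrite (bigD1 i) //= big1 ?mulr1; last first.
  by move=> j /negbTE hj; rewrite hj !andbF.
by rewrite eqxx andbT; change (sgb (i \in A :&: B) = sgb [&& i \in A & i \in B]); rewrite inE.
Qed.


Local Notation b := (clif_blade K).

Definition cz (k : K) x : clf := [ffun S => k * x S].
Local Notation "k *:: x" := (cz k x) (at level 40).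
Lemma ffD x y S : (x + y) S = x S + y S. Proof. by rewrite ffunE. Qed.
Lemma ffN x S : (- x) S = - x S. Proof. by rewrite ffunE. Qed.
Lemma ff0 S : (0 : clf) S = 0. Proof. by rewrite ffunE. Qed.
Lemma czE k x S : (k *:: x) S = k * x S. Proof. by rewrite ffunE. Qed.
Lemma czA k l x : k *:: (l *:: x) = (k * l) *:: x.
Proof. by apply/ffunP => S; rewrite !ffunE mulrA. Qed.
Lemma cz1 x : 1 *:: x = x.
Proof. by apply/ffunP => S; rewrite !ffunE mul1r. Qed.
Lemma cz0 x : 0 *:: x = 0.
Proof. by apply/ffunP => S; rewrite !ffunE mul0r. Qed.

Lemma cmulE x y S :
  cmul x y S = \sum_A \sum_(B | sd A B == S) sg2 A B * x A * y B.
Proof.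
rewrite /cmul ffunE; apply: eq_bigr => A _; apply: eq_bigr => B _.
by rewrite sign_sg2.
Qed.

Lemma bladeE A S : b A S = (S == A)%:R.
Proof. by rewrite /clif_blade ffunE. Qed.

Lemma expand x : x = \sum_A x A *:: b A.
Proof.
apply/ffunP => S; rewrite sum_ffunE (bigD1 S) //= big1 ?addr0.
  by rewrite ffunE bladeE eqxx mulr1.
by move=> A hA; rewrite ffunE bladeE eq_sym (negbTE hA) mulr0.
Qed.

Lemma cmulDl x y z : cmul (x + y) z = cmul x z + cmul y z.
Proof.
apply/ffunP => S; rewrite ffD !cmulE -big_split; apply: eq_bigr => A _.
rewrite -big_split; apply: eq_bigr => B _; rewrite ffD /=; by rewrite mulrDr mulrDl.
Qed.
Lemma cmulDr x y z : cmul x (y + z) = cmul x y + cmul x z.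
Proof.
apply/ffunP => S; rewrite ffD !cmulE -big_split; apply: eq_bigr => A _.
rewrite -big_split; apply: eq_bigr => B _; rewrite ffD /=; by rewrite mulrDr.
Qed.
Lemma cmulZl k x y : cmul (k *:: x) y = k *:: cmul x y.
Proof.
apply/ffunP => S; rewrite czE !cmulE mulr_sumr; apply: eq_bigr => A _.
rewrite mulr_sumr; apply: eq_bigr => B _; rewrite czE; ring.
Qed.
Lemma cmulZr k x y : cmul x (k *:: y) = k *:: cmul x y.
Proof.
apply/ffunP => S; rewrite czE !cmulE mulr_sumr; apply: eq_bigr => A _.
rewrite mulr_sumr; apply: eq_bigr => B _; rewrite czE; ring.
Qed.
Lemma cmul0l x : cmul 0 x = 0.
Proof. apply/ffunP => S; rewrite cmulE ff0 big1 // => A _; rewrite big1 // => B _; by rewrite ff0 mulr0 mul0r. Qed.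
Lemma cmul0r x : cmul x 0 = 0.
Proof. apply/ffunP => S; rewrite cmulE ff0 big1 // => A _; rewrite big1 // => B _; by rewrite ff0 mulr0. Qed.

Lemma cmul_blade_r x C S : cmul x (b C) S = sg2 (sd S C) C * x (sd S C).
Proof.
rewrite cmulE (bigD1 (sd S C)) //=.
rewrite [X in _ + X]big1 ?addr0; last first.
  move=> A hA; rewrite big1 // => B hB; rewrite bladeE.
  case: eqP => [eBC|]; last by rewrite mulr0.
  by move: hB; rewrite eBC sd_eq (negbTE hA).
rewrite (bigD1 C) ?sdK //= big1 ?addr0 ?bladeE ?eqxx ?mulr1 //.
by move=> B /andP [_ /negbTE hB]; rewrite bladeE hB mulr0.
Qed.

Lemma cmul_bb A B : cmul (b A) (b B) = sg2 A B *:: b (sd A B).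
Proof.
apply/ffunP => S; rewrite cmul_blade_r czE !bladeE.
case: (eqVneq S (sd A B)) => [->|hS]; first by rewrite sdK eqxx.
have -> : (sd S B == A) = false.
  by apply/negbTE; apply: contra hS => /eqP <-; rewrite sdK.
by rewrite !mulr0.
Qed.

Lemma lin_ext (f g : clf -> clf) :
  (forall x y, f (x + y) = f x + f y) -> f 0 = 0 -> (forall k x, f (k *:: x) = k *:: f x) ->
  (forall x y, g (x + y) = g x + g y) -> g 0 = 0 -> (forall k x, g (k *:: x) = k *:: g x) ->
  (forall A, f (b A) = g (b A)) -> forall x, f x = g x.
Proof.
move=> fD f0 fZ gD g0 gZ fg x; rewrite (expand x).
rewrite (big_morph f fD f0) (big_morph g gD g0); apply: eq_bigr => A _.
by rewrite fZ gZ fg.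
Qed.

Lemma cmulA x y z : cmul (cmul x y) z = cmul x (cmul y z).
Proof.
move: x; apply: lin_ext.
- by move=> ? ?; rewrite !cmulDl.
- by rewrite !cmul0l.
- by move=> ? ?; rewrite !cmulZl.
- by move=> ? ?; rewrite !cmulDl.
- by rewrite !cmul0l.
- by move=> ? ?; rewrite !cmulZl.
move=> A; move: y; apply: lin_ext.
- by move=> ? ?; rewrite !(cmulDl, cmulDr).
- by rewrite !(cmul0l, cmul0r).
- by move=> ? ?; rewrite !(cmulZl, cmulZr).
- by move=> ? ?; rewrite !(cmulDl, cmulDr).
- by rewrite !(cmul0l, cmul0r).
- by move=> ? ?; rewrite !(cmulZl, cmulZr).
move=> B; move: z; apply: lin_ext.
- by move=> ? ?; rewrite !(cmulDl, cmulDr).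
- by rewrite !(cmul0l, cmul0r).
- by move=> ? ?; rewrite !(cmulZl, cmulZr).
- by move=> ? ?; rewrite !(cmulDl, cmulDr).
- by rewrite !(cmul0l, cmul0r).
- by move=> ? ?; rewrite !(cmulZl, cmulZr).
move=> C; rewrite !cmul_bb cmulZl cmulZr !cmul_bb !czA sdA.
by rewrite sg2_cocycle mulrC.
Qed.

Lemma cmul1l x : cmul (cone K m) x = x.
Proof.
move: x; apply: (@lin_ext _ id).
- by move=> ? ?; rewrite !cmulDr.
- by rewrite !cmul0r.
- by move=> ? ?; rewrite !cmulZr.
- by [].
- by [].
- by [].
by move=> A; rewrite /cone cmul_bb sg20l sd0l cz1.
Qed.
Lemma cmul1r x : cmul x (cone K m) = x.
Proof.
move: x; apply: (@lin_ext _ id).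
- by move=> ? ?; rewrite !cmulDl.
- by rewrite !cmul0l.
- by move=> ? ?; rewrite !cmulZl.
- by [].
- by [].
- by [].
by move=> A; rewrite /cone cmul_bb sg20r sd0 cz1.
Qed.

End Cl.


Definition cl (K : comNzRingType) (m : nat) := {ffun {set 'I_m} -> K}.
HB.instance Definition _ K m := GRing.Zmodule.on (cl K m).
Section Inst.
Variables (K : comNzRingType) (m : nat).
Definition clmul : cl K m -> cl K m -> cl K m := @cmul K m.
Definition clone : cl K m := cone K m.
Lemma clmulA : associative clmul. Proof. move=> x y z; symmetry; exact: cmulA. Qed.
Lemma clmul1l : left_id clone clmul. Proof. exact: cmul1l. Qed.
Lemma clmul1r : right_id clone clmul. Proof. exact: cmul1r. Qed.
Lemma clmulDl : left_distributive clmul +%R. Proof. move=> x y z; exact: cmulDl. Qed.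
Lemma clmulDr : right_distributive clmul +%R. Proof. move=> x y z; exact: cmulDr. Qed.
HB.instance Definition _ := GRing.Zmodule_isPzRing.Build (cl K m)
  clmulA clmul1l clmul1r clmulDl clmulDr.
End Inst.

Section E.
Variable K : comNzRingType.
Variable n : nat.
Local Notation m := n.+1.
Local Notation b := (clif_blade K).
Local Notation sd := (@clif_symdiff m).
Local Notation T := [set: 'I_m].

Lemma mulE (x y : cl K m) : x * y = cmul x y.
Proof. by []. Qed.

Lemma top_blade : clif_top K m = b T.
Proof.
have H k : (k <= m)%N -> \prod_(0 <= i < k) (cgen K (inord i) : cl K m)
                        = b [set i : 'I_m | (i < k)%N].
  elim: k => [|k IH] hk.
    rewrite big_geq //; rewrite /cone; congr (b _); apply/setP => i; by rewrite !inE.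
  rewrite big_nat_recr //= IH ?(ltnW hk) // mulE /cgen cmul_bb.
  have -> : sg2 K [set i : 'I_m | (i < k)%N] [set inord k] = 1.
    rewrite /sg2 big1 // => p _; rewrite !inE.
    case: (eqVneq p.2 (inord k)) => [->|]; last by rewrite andbF.
    rewrite /= inordK //.
    by case: (ltnP p.1 k) => // h; rewrite leqNgt h.
  rewrite cz1; congr (b _); apply/setP => i; rewrite in_sd !inE ltnS [(i <= k)%N]leq_eqVlt.
  rewrite -val_eqE /= inordK //.
  by case: (ltngtP i k).
rewrite /clif_top.
change (\prod_(i < m) (cgen K i : cl K m) = b T).
rewrite (eq_bigr (fun i : 'I_m => (cgen K (inord i) : cl K m))); last first.
  by move=> i _; rewrite inord_val.
rewrite -(big_mkord xpredT (fun i => (cgen K (inord i) : cl K m))) H //.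
by congr (b _); apply/setP => i; rewrite !inE ltn_ord.
Qed.


Lemma sg2_pair A B : sg2 K A B =
  \prod_(i : 'I_m) \prod_(j : 'I_m) sgb K [&& i \in A, j \in B & (j <= i)%N].
Proof. by rewrite /sg2 pair_big. Qed.

Lemma sg2_TB (hn : ~~ odd n) B : sg2 K T B = sg2 K B T.
Proof.
have H : sg2 K T B * sg2 K B T = 1.
  rewrite !sg2_pair exchange_big -big_split /=.
  apply: big1 => j _; rewrite -big_split /=.
  case jB: (j \in B); last first.
    by rewrite big1 // => i _; rewrite /= !andbF /sgb mulr1.
  rewrite (eq_bigr (fun i => sgb K (i != j))); last first.
    move=> i _; rewrite !inE /= -sgbX; congr (sgb K _).
    by rewrite -val_eqE /=; case: (ltngtP i j).
  rewrite prod_sgb.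
  have -> : #|(fun i : 'I_m => i != j)| = #|predC1 j| by apply: eq_card.
  by rewrite cardC1 card_ord /= -signr_odd (negbTE hn) expr0.
have HH := sg2_sq K B T.
by rewrite -[LHS]mulr1 -HH mulrA H mul1r.
Qed.

Lemma sum_tri k : (\sum_(i < k) i.+1 = (k * k.+1)./2)%N.
Proof.
have H : (\sum_(i < k) i.+1).*2 = (k * k.+1)%N.
  elim: k => [|k IH]; first by rewrite big_ord0.
  rewrite big_ord_recr /= doubleD IH -!muln2; lia.
by rewrite -H doubleK.
Qed.

Lemma sg2TT : sg2 K T T = (-1) ^+ ((m * m.+1)./2).
Proof.
rewrite sg2_pair -sum_tri.
rewrite (big_morph (fun k => (-1 : K) ^+ k) (@exprD _ _) (expr0 _)).
apply: eq_bigr => i _.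
rewrite (eq_bigr (fun j : 'I_m => sgb K (j <= i)%N)); last by move=> j _; rewrite !inE.
rewrite prod_sgb; congr (_ ^+ _).
have hi : (i.+1 <= m)%N by exact: ltn_ord.
have winj : injective (widen_ord hi) by move=> x y /(congr1 val) /= /val_inj.
rewrite -[RHS](card_ord i.+1) -(card_codom winj).
apply: eq_card => j; apply/idP/codomP => [hj|[k ->]].
  by exists (Ordinal (hj : (j < i.+1)%N)); apply: val_inj.
by rewrite unfold_in /= -ltnS ltn_ord.
Qed.


Lemma E_central (hn : ~~ odd n) (x : {ffun {set 'I_m} -> K}) :
  cmul (b T) x = cmul x (b T).
Proof.
move: x; apply: lin_ext.
- by move=> ? ?; rewrite cmulDr.
- by rewrite cmul0r.
- by move=> ? ?; rewrite cmulZr.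
- by move=> ? ?; rewrite cmulDl.
- by rewrite cmul0l.
- by move=> ? ?; rewrite cmulZl.
by move=> A; rewrite !cmul_bb sdC sg2_TB.
Qed.

Lemma cscalE (c : K) : cscal m c = cz c (cone K m).
Proof.
by apply/ffunP => S; rewrite czE /cone bladeE ffunE; case: (S == set0); rewrite ?mulr1 ?mulr0.
Qed.

Lemma cscal_l (c : K) x : cmul (cscal m c) x = cz c x.
Proof. by rewrite cscalE cmulZl cmul1l. Qed.
Lemma cscal_r (c : K) x : cmul x (cscal m c) = cz c x.
Proof. by rewrite cscalE cmulZr cmul1r. Qed.

Lemma EE : cmul (b T) (b T) = cscal m ((-1) ^+ ((m * m.+1)./2)).
Proof. by rewrite cmul_bb sdvv sg2TT cscalE. Qed.

Lemma decomp (hn : ~~ odd n) (i0 : 'I_m) (a : {ffun {set 'I_m} -> K}) :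
  exists a0 a1 : {ffun {set 'I_m} -> K},
    [/\ forall S : {set 'I_m}, i0 \in S -> a0 S = 0, forall S : {set 'I_m}, i0 \in S -> a1 S = 0,
        a = a0 + cmul a1 (b T) & a = a0 + cmul (b T) a1].
Proof.
pose a0 : {ffun {set 'I_m} -> K} := [ffun S : {set 'I_m} => if i0 \in S then 0 else a S].
pose a1 : {ffun {set 'I_m} -> K} :=
  [ffun S : {set 'I_m} => if i0 \in S then 0 else sg2 K S T * a (sd S T)].
have h1 : a = a0 + cmul a1 (b T).
  apply/ffunP => S; rewrite ffD cmul_blade_r !ffunE in_sd !inE /= sdK.
  case: (i0 \in S) => /=; last by rewrite mulr0 addr0.
  by rewrite add0r mulrA sg2_sq mul1r.
exists a0, a1; split => //.
- by move=> S hS; rewrite ffunE hS.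
- by move=> S hS; rewrite ffunE hS.
by rewrite E_central.
Qed.

End E.


Section MX.
Variable Rg : pzRingType.
Definition central (c : Rg) := forall x, c * x = x * c.

Lemma centralD a b : central a -> central b -> central (a + b).
Proof. by move=> ha hb x; rewrite mulrDl mulrDr ha hb. Qed.
Lemma centralM a b : central a -> central b -> central (a * b).
Proof. by move=> ha hb x; rewrite -mulrA hb mulrA ha mulrA. Qed.
Lemma centralN a : central a -> central (- a).
Proof. by move=> ha x; rewrite mulNr mulrN ha. Qed.
Lemma central1 : central 1.
Proof. by move=> x; rewrite mul1r mulr1. Qed.

Lemma smx_comm p q (c : Rg) (M : 'M[Rg]_(p, q)) : central c ->
  c%:M *m M = M *m c%:M.
Proof.
move=> hc; apply/matrixP => i j; rewrite !mxE.
rewrite (bigD1 i) //= big1 ?addr0; last first.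
  by move=> k /negbTE hk; rewrite !mxE eq_sym hk mulr0n mul0r.
rewrite (bigD1 j) //= [X in _ = _ + X]big1 ?addr0; last first.
  by move=> k /negbTE hk; rewrite !mxE hk mulr0n mulr0.
by rewrite !mxE !eqxx !mulr1n hc.
Qed.

Lemma scal_central p q (c : Rg) (M : 'M[Rg]_(p, q)) : central c ->
  c *: M = M *m c%:M.
Proof. by move=> hc; rewrite -mul_scalar_mx smx_comm. Qed.

Lemma block_smx p (A B C D : 'M[Rg]_p) c :
  block_mx A B C D *m c%:M = block_mx (A *m c%:M) (B *m c%:M) (C *m c%:M) (D *m c%:M).
Proof.
by rewrite (scalar_mx_block p p c) mulmx_block !mulmx0 !addr0 !add0r.
Qed.

Lemma L1 p (P Q : 'M[Rg]_p) x c1 c2 : central c1 -> central c2 ->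
  (P *m c1%:M) *m x%:M *m (Q *m c2%:M) = (P *m x%:M *m Q) *m (c1 * c2)%:M.
Proof.
move=> h1 h2.
have e1 : P *m c1%:M *m x%:M = P *m x%:M *m c1%:M by rewrite -!mulmxA (smx_comm _ h1).
have e2 : P *m x%:M *m c1%:M *m Q = P *m x%:M *m Q *m c1%:M.
  by rewrite -!mulmxA (smx_comm _ h1).
by rewrite scalar_mxM !mulmxA e1 e2.
Qed.

Lemma L2 p (P Q : 'M[Rg]_p) c1 c2 : central c1 ->
  (Q *m c1%:M) *m (P *m c2%:M) = (Q *m P) *m (c1 * c2)%:M.
Proof.
move=> h1; rewrite scalar_mxM !mulmxA.
have e : Q *m c1%:M *m P = Q *m P *m c1%:M by rewrite -!mulmxA (smx_comm _ h1).
by rewrite e.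
Qed.

End MX.

Section Bridge.
Variables (K : comNzRingType) (m : nat).
Local Notation C := (cl K m).

Lemma cmxmulE p q r (A : 'M[clif K m]_(p, q)) (B : 'M[clif K m]_(q, r)) :
  cmxmul A B = ((A : 'M[C]_(p, q)) *m B).
Proof. by apply/matrixP => i j; rewrite !mxE. Qed.

Lemma cmxscalarE p (a : clif K m) : cmxscalar p a = (a : C)%:M.
Proof. by apply/matrixP => i j; rewrite !mxE; case: (i == j). Qed.

Lemma cmxlmulE p q (c : clif K m) (M : 'M[clif K m]_(p, q)) :
  cmxlmul c M = (c : C) *: (M : 'M[C]_(p, q)).
Proof. by apply/matrixP => i j; rewrite !mxE. Qed.

Lemma cmxrmulE p (c : clif K m) (M : 'M[clif K m]_(p)) :
  cmxrmul M c = (M : 'M[C]_p) *m (c : C)%:M.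
Proof.
apply/matrixP => i j; rewrite !mxE (bigD1 j) //= big1 ?addr0; last first.
  by move=> k /negbTE hk; rewrite !mxE hk mulr0n mulr0.
by rewrite !mxE eqxx mulr1n.
Qed.

End Bridge.

Section FF.
Variables (K : comNzRingType) (n : nat) (hn : ~~ odd n).
Local Notation m := n.+1.
Local Notation C := (cl K m).
Local Notation T := [set: 'I_m].
Local Notation Eb := (clif_blade K T : C).
Local Notation rr := ((-1 : K) ^+ ((m * m.+1)./2)).

Local Notation cs a := (cscal m a : C).
Definition F (a b : K) : C := cs a + cs b * Eb.

Lemma cscalD a b : (cs (a + b) : C) = cs a + cs b.
Proof. by apply/ffunP => S; rewrite ffD !ffunE; case: (S == set0); rewrite ?addr0. Qed.
Lemma cscalM a b : cs a * cs b = cs (a * b).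
Proof.
rewrite mulE cscal_l; apply/ffunP => S; rewrite czE !ffunE.
by case: (S == set0); rewrite ?mulr0.
Qed.
Lemma cscal0 : (cs 0 : C) = 0.
Proof. by apply/ffunP => S; rewrite !ffunE; case: (S == set0). Qed.
Lemma cscal1 : (cs 1 : C) = 1.
Proof. by rewrite cscalE cz1. Qed.
Lemma cscalN a : (cs (- a) : C) = - cs a.
Proof. by apply/ffunP => S; rewrite ffN !ffunE; case: (S == set0); rewrite ?oppr0. Qed.

Lemma central_cscal a : central (cs a).
Proof. by move=> x; rewrite !mulE cscal_l cscal_r. Qed.
Lemma central_E : central Eb.
Proof. by move=> x; rewrite !mulE E_central. Qed.

Lemma central_F a b : central (F a b).
Proof. apply: centralD; [exact: central_cscal | apply: centralM; [exact: central_cscal|exact: central_E]]. Qed.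

Lemma FD a b c d : F a b + F c d = F (a + c) (b + d).
Proof. rewrite /F !cscalD mulrDl; rewrite -!addrA; congr (_ + _); rewrite addrCA; done. Qed.
Lemma FN a b : - F a b = F (- a) (- b).
Proof. by rewrite /F !cscalN opprD mulNr. Qed.
Lemma FM a b c d : F a b * F c d = F (a * c + rr * b * d) (a * d + b * c).
Proof.
rewrite /F mulrDl !mulrDr !cscalD.
have EE' : Eb * Eb = cs rr by rewrite mulE EE.
have e1 : cs a * (cs d * Eb) = cs (a * d) * Eb by rewrite mulrA cscalM.
have e2 : cs b * Eb * cs c = cs (b * c) * Eb.
  by rewrite -mulrA central_E mulrA cscalM.
have e3 : cs b * Eb * (cs d * Eb) = cs (rr * b * d).
  rewrite -mulrA [Eb * (_ * _)]mulrA central_E -mulrA -[cs d * Eb * Eb]mulrA EE' !cscalM.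
  by f_equal; ring.
rewrite e1 e2 e3 cscalM mulrDl; rewrite -!addrA; congr (_ + _).
by rewrite addrA addrC.
Qed.

End FF.


Section Abs.
Variable Rg : pzRingType.
Variable N : nat.
Implicit Types (X Y P Q : 'M[Rg]_N).

Lemma smx0 : (0 : Rg)%:M = 0 :> 'M[Rg]_N.
Proof. by apply/matrixP => i j; rewrite !mxE mul0rn. Qed.
Lemma smxD (a b : Rg) : (a + b)%:M = a%:M + b%:M :> 'M[Rg]_N.
Proof. by apply/matrixP => i j; rewrite !mxE mulrnDl. Qed.
Lemma smxN (a : Rg) : (- a)%:M = - a%:M :> 'M[Rg]_N.
Proof. by apply/matrixP => i j; rewrite !mxE mulNrn. Qed.

Lemma sandwich p (A B C : 'M[Rg]_p) c : central c ->
  A *m c%:M *m B *m (C *m c%:M) = A *m B *m C *m (c * c)%:M.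
Proof.
move=> hc.
have e1 : A *m c%:M *m B = A *m B *m c%:M by rewrite -!mulmxA (smx_comm B hc).
have e2 : A *m B *m c%:M *m C = A *m B *m C *m c%:M by rewrite -!mulmxA (smx_comm C hc).
by rewrite e1 mulmxA e2 scalar_mxM !mulmxA.
Qed.

Lemma inv_abs P Q (h u v w : Rg) :
  central h -> central u -> central v -> central w ->
  P *m Q = 1%:M ->
  (u * u + (- v) * (- w)) * (h * h) = 1 ->
  (u * v + (- v) * u) * (h * h) = 0 ->
  (w * u + u * (- w)) * (h * h) = 0 ->
  (w * v + u * u) * (h * h) = 1 ->
  (h *: block_mx (u *: P) ((- v) *: P) (w *: P) (u *: P)) *m
  (h *: block_mx (Q *m u%:M) (Q *m v%:M) (Q *m (- w)%:M) (Q *m u%:M)) = 1%:M.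
Proof.
move=> ch cu cv cw hPQ e11 e12 e21 e22.
have cnv := centralN cv; have cnw := centralN cw.
rewrite !(scal_central _ ch) !(scal_central _ cu) !(scal_central _ cnv) !(scal_central _ cw).
rewrite mulmxA -[_ *m h%:M *m _]mulmxA (smx_comm _ ch) !mulmxA -mulmxA -scalar_mxM.
rewrite mulmx_block !L2 // hPQ !mul1mx -!smxD block_smx -!scalar_mxM.
by rewrite e11 e12 e21 e22 smx0 -scalar_mx_block.
Qed.


Lemma inv_abs2 P Q (h u v w : Rg) :
  central h -> central u -> central v -> central w ->
  Q *m P = 1%:M ->
  (u * u + v * w) * (h * h) = 1 ->
  (u * (- v) + v * u) * (h * h) = 0 ->
  ((- w) * u + u * w) * (h * h) = 0 ->
  ((- w) * (- v) + u * u) * (h * h) = 1 ->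
  (h *: block_mx (Q *m u%:M) (Q *m v%:M) (Q *m (- w)%:M) (Q *m u%:M)) *m
  (h *: block_mx (u *: P) ((- v) *: P) (w *: P) (u *: P)) = 1%:M.
Proof.
move=> ch cu cv cw hQP e11 e12 e21 e22.
have cnv := centralN cv; have cnw := centralN cw.
rewrite !(scal_central _ ch) !(scal_central _ cu) !(scal_central _ cnv) !(scal_central _ cw).
rewrite mulmxA -[_ *m h%:M *m _]mulmxA (smx_comm _ ch) !mulmxA -mulmxA -scalar_mxM.
rewrite mulmx_block !L2 // hQP !mul1mx -!smxD block_smx -!scalar_mxM.
by rewrite e11 e12 e21 e22 smx0 -scalar_mx_block.
Qed.

Lemma collect X0 X1 (E c d : Rg) : central E ->
  (X0 + X1 *m E%:M) *m c%:M + (X0 - X1 *m E%:M) *m d%:M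
  = X0 *m (c + d)%:M + X1 *m (E * c - E * d)%:M.
Proof.
move=> cE.
rewrite mulmxDl mulmxBl !smxD !smxN !scalar_mxM !mulmxDr !mulmxN !mulmxA.
by rewrite -!addrA; congr (_ + _); rewrite addrCA.
Qed.

Lemma conj_abs P Q (h u v w E sg a0 a1 : Rg) :
  central h -> central u -> central v -> central w -> central E -> central sg ->
  let X0 := P *m a0%:M *m Q in
  let X1 := P *m a1%:M *m Q in
  (u * u + (- v) * (- w)) * (h * h) = 1 ->
  (E * (u * u) - E * ((- v) * (- w))) * (h * h) = sg ->
  (u * v + (- v) * u) * (h * h) = 0 ->
  (E * (u * v) - E * ((- v) * u)) * (h * h) = 0 ->
  (w * u + u * (- w)) * (h * h) = 0 ->
  (E * (w * u) - E * (u * (- w))) * (h * h) = 0 ->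
  (w * v + u * u) * (h * h) = 1 ->
  (E * (w * v) - E * (u * u)) * (h * h) = - sg ->
  (h *: block_mx (u *: P) ((- v) *: P) (w *: P) (u *: P)) *m
    block_mx (a0 + a1 * E)%:M 0 0 (a0 - a1 * E)%:M *m
  (h *: block_mx (Q *m u%:M) (Q *m v%:M) (Q *m (- w)%:M) (Q *m u%:M))
  = block_mx (X0 + sg *: X1) 0 0 (X0 - sg *: X1).
Proof.
move=> ch cu cv cw cE csg X0 X1 e11 f11 e12 f12 e21 f21 e22 f22.
have cnv := centralN cv; have cnw := centralN cw.
have hXa : P *m (a0 + a1 * E)%:M *m Q = X0 + X1 *m E%:M.
  rewrite smxD mulmxDr mulmxDl scalar_mxM mulmxA -[P *m a1%:M *m E%:M *m Q]mulmxA.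
  by rewrite (smx_comm _ cE) mulmxA.
have hXb : P *m (a0 - a1 * E)%:M *m Q = X0 - X1 *m E%:M.
  rewrite smxD smxN mulmxDr mulmxDl mulmxN mulNmx scalar_mxM mulmxA.
  by rewrite -[P *m a1%:M *m E%:M *m Q]mulmxA (smx_comm _ cE) mulmxA.
rewrite !(scal_central _ ch) !(scal_central _ cu) !(scal_central _ cnv) !(scal_central _ cw).
rewrite !(scal_central _ csg).
rewrite sandwich //.
rewrite mulmx_block !mulmx0 !addr0 !add0r mulmx_block !L1 // hXa hXb !collect //.
rewrite block_smx !mulmxDl -!mulmxA -!scalar_mxM.
rewrite e11 f11 e12 f12 e21 f21 e22 f22 !smx0 !mulmx0 !addr0 !mulmx1 smxN !mulmxN.
by rewrite /X0 /X1 !mulmxA.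
Qed.

End Abs.

End Helpers.
Import Helpers.

Theorem theorem14 (R : realType) (n : nat) (hn : ~~ odd n)
  (P Q : 'M[clif R[i] n.+1]_(2 ^ n./2))
  (hPsub : forall i j, in_clif_sub (P i j))
  (hQsub : forall i j, in_clif_sub (Q i j))
  (hPQ : cmxmul P Q = cmxscalar _ (cone _ _))
  (hQP : cmxmul Q P = cmxscalar _ (cone _ _))
  (hphi : forall a : clif R[i] n.+1, in_clif_sub a ->
     forall i j, is_scalar (cmxmul (cmxmul P (cmxscalar _ a)) Q i j))
  (s : R[i]) (hs : s ^+ 2 = (-1) ^+ ((n.+1 * n.+2)./2)) :
  let r : R[i] := (-1) ^+ ((n.+1 * n.+2)./2) in
  let E : clif R[i] n.+1 := clif_top R[i] n.+1 in
  let phi (a : clif R[i] n.+1) := cmxmul (cmxmul P (cmxscalar _ a)) Q in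
  let u := cone _ _ + cmul (cscal _ s^-1) E in
  let v := cscal _ s - E in
  let w := cmul (cscal _ r^-1) v in
  let P1 := cmxlmul (cscal _ 2^-1)
              (block_mx (cmxlmul u P) (cmxlmul (- v) P)
                        (cmxlmul w P) (cmxlmul u P)) in
  let P1' := cmxlmul (cscal _ 2^-1)
              (block_mx (cmxrmul Q u) (cmxrmul Q v)
                        (cmxrmul Q (- w)) (cmxrmul Q u)) in
  [/\ cmul E E = cscal _ r,
      (forall a : clif R[i] n.+1, exists a0 a1 : clif R[i] n.+1,
          [/\ in_clif_sub a0, in_clif_sub a1,
              a = a0 + cmul a1 E & a = a0 + cmul E a1]),
      cmxmul P1 P1' = cmxscalar _ (cone _ _),
      cmxmul P1' P1 = cmxscalar _ (cone _ _) &
      forall a0 a1 : clif R[i] n.+1, in_clif_sub a0 -> in_clif_sub a1 ->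
        let a := a0 + cmul a1 E in
        let abar := a0 - cmul a1 E in
        cmxmul (cmxmul P1 (block_mx (cmxscalar _ a) 0 0 (cmxscalar _ abar))) P1'
        = block_mx (phi a0 + cmxlmul (cscal _ s) (phi a1)) 0
                   0 (phi a0 - cmxlmul (cscal _ s) (phi a1))].
Proof.
move=> r E phi u v w P1 P1'.
have hE : E = clif_blade _ [set: 'I_n.+1] := top_blade R[i] n.
have s0 : s != 0.
  apply/eqP => h0; move: hs; rewrite h0 expr0n /= => /eqP.
  by rewrite eq_sym signr_eq0.
have hr : r = s ^+ 2 by rewrite hs.
pose C := cl R[i] n.+1.
have F10 : @F R[i] n 1 0 = 1 by rewrite /F cscal1 cscal0 mul0r addr0.
have F00 : @F R[i] n 0 0 = 0 by rewrite /F cscal0 mul0r addr0.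
have hu : (u : C) = @F R[i] n 1 s^-1 by rewrite /F cscal1 /u hE.
have hv : (v : C) = @F R[i] n s (-1).
  by rewrite /F cscalN cscal1 mulN1r /v hE.
have hw : (w : C) = @F R[i] n r^-1 0 * @F R[i] n s (-1).
  by rewrite -hv /w {1}/F cscal0 mul0r addr0.
have hh : (cscal n.+1 (2^-1 : R[i]) : C) = @F R[i] n 2^-1 0.
  by rewrite /F cscal0 mul0r addr0.
have hEF : (E : C) = @F R[i] n 0 1 by rewrite /F cscal0 cscal1 mul1r add0r hE.
have cF := central_F hn.
split.
- by rewrite hE; exact: EE.
- move=> a; have [a0 [a1 [h0 h1 e1 e2]]] := decomp hn ord_max a.
  by exists a0, a1; rewrite hE; split.
- rewrite /P1 /P1' !cmxlmulE !cmxrmulE !cmxmulE cmxscalarE.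
  rewrite !cmxmulE cmxscalarE in hPQ hQP.
  rewrite hh hu hv hw.
  refine (@inv_abs C _ P Q _ _ _ _ _ _ _ _ _ _ _ _ _).
  1-3: exact: cF.
  apply: centralM; exact: cF.
  exact: hPQ.
  1-4: rewrite -?F10 -?F00; do 5 rewrite ?(FM hn) ?FN ?FD.
  1-4: by f_equal; rewrite /r -?hs; field; rewrite ?s0.
- rewrite /P1 /P1' !cmxlmulE !cmxrmulE !cmxmulE cmxscalarE.
  rewrite !cmxmulE cmxscalarE in hPQ hQP.
  rewrite hh hu hv hw.
  refine (@inv_abs2 C _ P Q _ _ _ _ _ _ _ _ _ _ _ _ _).
  1-3: exact: cF.
  apply: centralM; exact: cF.
  exact: hQP.
  1-4: rewrite -?F10 -?F00; do 5 rewrite ?(FM hn) ?FN ?FD.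
  1-4: by f_equal; rewrite /r -?hs; field; rewrite ?s0.
- move=> a0 a1 h0 h1 a abar.
  rewrite /P1 /P1' /phi /a /abar !cmxlmulE !cmxrmulE !cmxmulE !cmxscalarE.
  have hsg : (cscal n.+1 s : C) = @F R[i] n s 0 by rewrite /F cscal0 mul0r addr0.
  rewrite hh hu hv hw hEF hsg.
  refine (@conj_abs C _ P Q _ _ _ _ _ _ a0 a1 _ _ _ _ _ _ _ _ _ _ _ _ _ _).
  1-3: exact: cF.
  apply: centralM; exact: cF.
  1-2: exact: cF.
  1-8: rewrite -?F10 -?F00; do 6 rewrite ?(FM hn) ?FN ?FD.
  1-8: by f_equal; rewrite /r -?hs; field; rewrite ?s0.
Qed.
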